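(* Let $\mathcal{H}$ be an $n$-dimensional (real or complex) Hilbert space, let $F=\{f_i\}_{i=1}^N$ be a frame for $\mathcal{H}$, and let $\{q_i\}_{i=1}^N$ be the weight number sequence associated with a probability sequence $\{p_i\}_{i=1}^N$. Then the set $\Delta_F^{(1)}$ of all 1-erasure probabilistic averaged spectrally optimal dual frames (PASOD-frames) of $F$ is convex.
   Context: A finite sequence $F=\{f_i\}_{i=1}^N$ in $\mathcal{H}$ is a frame if there are $A,B>0$ with $A\|f\|^2\le\sum_{i=1}^N|\langle f,f_i\rangle|^2\le B\|f\|^2$ for all $f\in\mathcal{H}$. A frame $G=\{g_i\}_{i=1}^N$ is a dual frame of $F$ if $f=\sum_{i=1}^N\langle f,f_i\rangle g_i=\sum_{i=1}^N\langle f,g_i\rangle f_i$ for all $f\in\mathcal{H}$. A probability sequence is $\{p_i\}_{i=1}^N$ with $0\le p_i\le 1$ and $\sum_{i=1}^N p_i=1$; its weight numbers are $q_i=\frac{\sum_{j=1}^N p_j}{\sum_{j=1}^N p_j-p_i}\cdot\frac{N-1}{n}$. For $\Lambda\subseteq\{1,\dots,N\}$ and a dual $G$ of $F$, the error operator is $E_{\Lambda,(F,G)}f=\sum_{i\in\Lambda}q_i\langle f,f_i\rangle g_i$. Define $\mathcal{A}_P^{(1)}(F,G)=\max_{|\Lambda|=1}\frac{\|E_{\Lambda,(F,G)}\|+\rho(E_{\Lambda,(F,G)})}{2}$, where $\|\cdot\|$ is the operator norm and $\rho$ the spectral radius, and $\mathcal{A}_P^{(1)}(F)=\inf\{\mathcal{A}_P^{(1)}(F,G):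 G \text{ a dual of } F\}$. A dual $G$ of $F$ is a 1-erasure PASOD-frame of $F$ if $\mathcal{A}_P^{(1)}(F,G)=\mathcal{A}_P^{(1)}(F)$; $\Delta_F^{(1)}$ denotes the set of these. *)

(* Defs.v *)
From mathcomp Require Import all_boot all_order all_algebra.
From mathcomp Require Import classical_sets reals.
From mathcomp.real_closed Require Import complex.

Set Implicit Arguments.
Unset Strict Implicit.
Unset Printing Implicit Defensive.

Import Order.TTheory GRing.Theory Num.Theory.
Local Open Scope classical_set_scope.
Local Open Scope ring_scope.

(* The n-dimensional Hilbert space H is modelled as K^n (column vectors),
   K = R or K = C = R[i].  Both are realised inside 'cV[R[i]]_n:
   the real space R^n is the set of vectors with real (zero-imaginary) entries. *)
Inductive scalar_field := RealField | ComplexField.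

Section Frames.
Variable R : realType.
Local Notation C := R[i].

Definition is_scalar (k : scalar_field) (z : C) : Prop :=
  if k is RealField then Im z = 0 else True.

Definition inH (k : scalar_field) (n : nat) (x : 'cV[C]_n) : Prop :=
  forall j, is_scalar k (x j 0).

Definition absc (z : C) : R := Normc.normc z.

Definition inner (n : nat) (x y : 'cV[C]_n) : C :=
  \sum_(j < n) x j 0 * conjc (y j 0).

Definition hnorm (n : nat) (x : 'cV[C]_n) : R :=
  Num.sqrt (\sum_(j < n) absc (x j 0) ^+ 2).

Definition is_frame (k : scalar_field) (n N : nat) (F : 'I_N -> 'cV[C]_n) : Prop :=
  (forall i, inH k (F i)) /\
  exists A B : R, 0 < A /\ 0 < B /\
    forall f, inH k f ->
      A * hnorm f ^+ 2 <= \sum_(i < N) absc (inner f (F i)) ^+ 2 /\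
      \sum_(i < N) absc (inner f (F i)) ^+ 2 <= B * hnorm f ^+ 2.

Definition is_dual (k : scalar_field) (n N : nat) (F G : 'I_N -> 'cV[C]_n) : Prop :=
  is_frame k G /\
  forall f, inH k f ->
    f = \sum_(i < N) inner f (F i) *: G i /\
    f = \sum_(i < N) inner f (G i) *: F i.

Definition prob_seq (N : nat) (p : 'I_N -> R) : Prop :=
  (forall i, 0 <= p i <= 1) /\ \sum_(i < N) p i = 1.

Definition weight (n N : nat) (p : 'I_N -> R) (i : 'I_N) : R :=
  (\sum_(j < N) p j) / (\sum_(j < N) p j - p i) * ((N%:R - 1) / n%:R).

(* error operator E_{Lambda,(F,G)} f = sum_{i in Lambda} q_i <f,f_i> g_i,
   as the matrix  sum_{i in Lambda} q_i g_i f_i^*  acting on column vectors *)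
Definition err_op (n N : nat) (q : 'I_N -> R) (L : {set 'I_N})
    (F G : 'I_N -> 'cV[C]_n) : 'M[C]_n :=
  \sum_(i in L) (real_complex R (q i)) *: (G i *m \row_(j < n) conjc (F i j 0)).

Definition opnorm (k : scalar_field) (n : nat) (T : 'M[C]_n) : R :=
  sup [set hnorm (T *m x) | x in [set x | inH k x /\ hnorm x = 1]].

(* (complex) eigenvalues; for real H this is the spectrum of the complexification *)
Definition is_eigenvalue (n : nat) (T : 'M[C]_n) (l : C) : Prop :=
  exists x : 'cV[C]_n, x != 0 /\ T *m x = l *: x.

Definition specrad (n : nat) (T : 'M[C]_n) : R :=
  sup [set absc l | l in [set l | is_eigenvalue T l]].

Definition AP1 (k : scalar_field) (n N : nat) (p : 'I_N -> R)
    (F G : 'I_N -> 'cV[C]_n) : R :=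
  \big[Num.max/0]_(L : {set 'I_N} | #|L| == 1%N)
     ((opnorm k (err_op (weight n p) L F G) +
       specrad (err_op (weight n p) L F G)) / 2).

Definition AP1_opt (k : scalar_field) (n N : nat) (p : 'I_N -> R)
    (F : 'I_N -> 'cV[C]_n) : R :=
  inf [set AP1 k p F G | G in [set G | is_dual k F G]].

Definition PASOD1 (k : scalar_field) (n N : nat) (p : 'I_N -> R)
    (F : 'I_N -> 'cV[C]_n) : set ('I_N -> 'cV[C]_n) :=
  [set G | is_dual k F G /\ AP1 k p F G = AP1_opt k p F].

Definition convex_frames (n N : nat) (S : set ('I_N -> 'cV[C]_n)) : Prop :=
  forall G1 G2, S G1 -> S G2 -> forall t : R, 0 <= t <= 1 ->
    S (fun i => real_complex R t *: G1 i + real_complex R (1 - t) *: G2 i).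

End Frames.

(* Main.v *)
Require Import Defs.
From mathcomp Require Import all_boot all_order all_algebra.
From mathcomp Require Import boolp classical_sets reals.
From mathcomp.real_closed Require Import complex.
From mathcomp Require Import ring lra.
Import Order.TTheory GRing.Theory Num.Theory.
Local Open Scope classical_set_scope.
Local Open Scope ring_scope.
Local Open Scope complex_scope.

Section Aux.
Variable R : realType.
Local Notation C := R[i].

Lemma abscE (z : C) : (absc z)%:C = `|z|.
Proof. by []. Qed.

Lemma absc_ge0 (z : C) : 0 <= absc z.
Proof. by rewrite -ler0c abscE normr_ge0. Qed.

Lemma absc_add (x y : C) : absc (x + y) <= absc x + absc y.
Proof. by rewrite -lecR rmorphD /= !abscE ler_normD. Qed.

Lemma abscM (x y : C) : absc (x * y) = absc x * absc y.
Proof. by apply: complexI; rewrite rmorphM /= !abscE normrM. Qed.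

Lemma absc_conj (x : C) : absc (conjc x) = absc x.
Proof. by apply: complexI; rewrite !abscE normcJ. Qed.

Lemma absc_real (t : R) : absc t%:C = `|t|.
Proof.
apply: complexI; rewrite abscE normc_def /=.
by rewrite expr0n /= addr0 sqrtr_sqr.
Qed.

Lemma absc_sum (I : finType) (P : pred I) (F : I -> C) :
  absc (\sum_(i | P i) F i) <= \sum_(i | P i) absc (F i).
Proof.
rewrite -lecR rmorph_sum /= abscE; apply: (le_trans (ler_norm_sum _ _ _)).
by apply: ler_sum => i _; rewrite abscE.
Qed.


Lemma cs (I : finType) (a b : I -> R) : (forall i, 0 <= a i) -> (forall i, 0 <= b i) ->
  \sum_i a i * b i <= Num.sqrt (\sum_i a i ^+ 2) * Num.sqrt (\sum_i b i ^+ 2).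
Proof.
move=> a0 b0.
have Sa0 : 0 <= \sum_i a i ^+ 2 by apply: sumr_ge0 => i _; apply: sqr_ge0.
have Sb0 : 0 <= \sum_i b i ^+ 2 by apply: sumr_ge0 => i _; apply: sqr_ge0.
set x := Num.sqrt _; set y := Num.sqrt _.
have x0 : 0 <= x by apply: sqrtr_ge0.
have y0 : 0 <= y by apply: sqrtr_ge0.
have Sab0 : 0 <= \sum_i a i * b i by apply: sumr_ge0 => i _; apply: mulr_ge0.
have [xz|xnz] := eqVneq x 0.
  have : \sum_i a i ^+ 2 = 0.
    by apply/eqP; rewrite eq_le Sa0 andbT -sqrtr_eq0; apply/eqP.
  move/psumr_eq0P => H.
  have -> : \sum_i a i * b i = 0.
    by apply: big1 => i _; have /eqP := H (fun i _ => sqr_ge0 _) i isT; rewrite sqrf_eq0 => /eqP ->; rewrite mul0r.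
  by rewrite xz mul0r.
have [yz|ynz] := eqVneq y 0.
  have : \sum_i b i ^+ 2 = 0.
    by apply/eqP; rewrite eq_le Sb0 andbT -sqrtr_eq0; apply/eqP.
  move/psumr_eq0P => H.
  have -> : \sum_i a i * b i = 0.
    by apply: big1 => i _; have /eqP := H (fun i _ => sqr_ge0 _) i isT; rewrite sqrf_eq0 => /eqP ->; rewrite mulr0.
  by rewrite yz mulr0.
have xp : 0 < x by rewrite lt_def xnz.
have yp : 0 < y by rewrite lt_def ynz.
have H : 0 <= \sum_i (y * a i - x * b i) ^+ 2 by apply: sumr_ge0 => i _; apply: sqr_ge0.
have E : \sum_i (y * a i - x * b i) ^+ 2 =
   y ^+ 2 * \sum_i a i ^+ 2 + x ^+ 2 * \sum_i b i ^+ 2 - (2 * x * y) * \sum_i a i * b i.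
  rewrite !mulr_sumr -big_split -sumrB /=; apply: eq_bigr => i _; ring.
rewrite E /x /y !sqr_sqrtr // -/x -/y in H.
have xyp : 0 < x * y by apply: mulr_gt0.
set S := \sum_i a i * b i in H *.
set Sa := \sum_i a i ^+ 2 in H. set Sb := \sum_i b i ^+ 2 in H.
have hx : x ^+ 2 = Sa by rewrite /x sqr_sqrtr.
have hy : y ^+ 2 = Sb by rewrite /y sqr_sqrtr.
rewrite -hx -hy in H.
nra.
Qed.

Section Vec.
Variable n : nat.
Implicit Types x y : 'cV[C]_n.

Lemma hnorm_ge0 x : 0 <= hnorm x.
Proof. exact: sqrtr_ge0. Qed.

Lemma hnorm_sq x : hnorm x ^+ 2 = \sum_(j < n) absc (x j 0) ^+ 2.
Proof. by rewrite /hnorm sqr_sqrtr // sumr_ge0 // => j _; apply: sqr_ge0. Qed.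

Lemma hnorm_add x y : hnorm (x + y) <= hnorm x + hnorm y.
Proof.
have h0 : 0 <= hnorm x + hnorm y by rewrite addr_ge0 ?hnorm_ge0.
rewrite -(ger0_norm h0) -sqrtr_sqr /hnorm ler_sqrt ?sqr_ge0 //.
rewrite -/(hnorm x) -/(hnorm y) sqrrD !hnorm_sq.
have Hcs := cs _ (fun j => absc (x j 0)) (fun j => absc (y j 0)) (fun j => absc_ge0 _) (fun j => absc_ge0 _).
rewrite -/(hnorm x) -/(hnorm y) /= in Hcs.
apply: (@le_trans _ _ (\sum_(j < n) (absc (x j 0) + absc (y j 0)) ^+ 2)).
  apply: ler_sum => j _; rewrite mxE.
  have := absc_add (x j 0) (y j 0); have := absc_ge0 (x j 0 + y j 0).
  have := absc_ge0 (x j 0); have := absc_ge0 (y j 0); nra.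
under eq_bigr do rewrite sqrrD.
rewrite big_split big_split /=.
apply: lerD => //; apply: lerD => //; rewrite sumrMnl lerMn2r //=.
Qed.

Lemma hnorm_scale (c : C) x : hnorm (c *: x) = absc c * hnorm x.
Proof.
rewrite /hnorm.
have -> : \sum_(j < n) absc ((c *: x) j 0) ^+ 2 = absc c ^+ 2 * \sum_(j < n) absc (x j 0) ^+ 2.
  by rewrite mulr_sumr; apply: eq_bigr => j _; rewrite mxE abscM exprMn.
by rewrite sqrtrM ?sqr_ge0 // sqrtr_sqr ger0_norm // absc_ge0.
Qed.

Lemma hnorm0 : hnorm (0 : 'cV[C]_n) = 0.
Proof.
rewrite /hnorm big1 ?sqrtr0 // => j _; rewrite mxE.
by rewrite -(rmorph0 (real_complex R)) absc_real normr0 expr0n.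
Qed.

Lemma hnorm_sum (I : finType) (P : pred I) (v : I -> 'cV[C]_n) :
  hnorm (\sum_(i | P i) v i) <= \sum_(i | P i) hnorm (v i).
Proof.
apply: (big_ind2 (fun u r => hnorm u <= r)); first by rewrite hnorm0.
  by move=> u1 r1 u2 r2 h1 h2; apply: le_trans (hnorm_add _ _) _; apply: lerD.
by [].
Qed.

Lemma absc_le_hnorm x j : absc (x j 0) <= hnorm x.
Proof.
rewrite -(ger0_norm (absc_ge0 (x j 0))) -sqrtr_sqr /hnorm ler_sqrt; last first.
  by apply: sumr_ge0 => i _; apply: sqr_ge0.
rewrite (bigD1 j) //= lerDl; apply: sumr_ge0 => i _; apply: sqr_ge0.
Qed.

End Vec.

Section Ops.
Variable n : nat.
Implicit Types x y u v w : 'cV[C]_n.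

Lemma mulmx_cols (T : 'M[C]_n) x : T *m x = \sum_(j < n) x j 0 *: col j T.
Proof.
apply/matrixP => i a; rewrite !mxE summxE; apply: eq_bigr => j _.
by rewrite !mxE (ord1 a) mulrC.
Qed.

Lemma opnorm_set_ub k (T : 'M[C]_n) :
  has_ubound [set hnorm (T *m x) | x in [set x | inH k x /\ hnorm x = 1]].
Proof.
exists (\sum_(j < n) hnorm (col j T)) => _ [x [_ hx1] <-].
rewrite mulmx_cols; apply: le_trans (hnorm_sum _ _ _ _) _.
apply: ler_sum => j _; rewrite hnorm_scale.
rewrite -[leRHS]mul1r; apply: ler_wpM2r; first exact: hnorm_ge0.
by rewrite -hx1; apply: absc_le_hnorm.
Qed.

Lemma opnorm_ub k (T : 'M[C]_n) x : inH k x -> hnorm x = 1 -> hnorm (T *m x) <= opnorm k T.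
Proof. by move=> hk h1; apply: ub_le_sup (opnorm_set_ub k T) _ _; exists x. Qed.

Lemma opnorm_ge0 k (T : 'M[C]_n) : 0 <= opnorm k T.
Proof.
rewrite /opnorm.
have [[x [hk h1]]|nx] := pselect (exists x, inH k x /\ hnorm x = 1).
  apply: le_trans (hnorm_ge0 _ (T *m x)) _; apply: ub_le_sup (opnorm_set_ub k T) _ _; by exists x.
have -> : [set hnorm (T *m x) | x in [set x | inH k x /\ hnorm x = 1]] = set0.
  by apply/seteqP; split => [y [x hx _]|y //]; apply: nx; exists x.
by rewrite sup0.
Qed.

Lemma opnorm_convex k (A B : 'M[C]_n) (t : R) : 0 <= t <= 1 ->
  opnorm k (t%:C *: A + (1 - t)%:C *: B) <= t * opnorm k A + (1 - t) * opnorm k B.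
Proof.
case/andP => t0 t1.
have t1' : 0 <= 1 - t by rewrite subr_ge0.
rewrite {1}/opnorm.
have [[x0 hx0]|nx] := pselect (exists x, inH k x /\ hnorm x = 1); last first.
  have -> : [set hnorm ((t%:C *: A + (1 - t)%:C *: B) *m x) | x in [set x | inH k x /\ hnorm x = 1]] = set0.
    by apply/seteqP; split => [y [x hx _]|y //]; apply: nx; exists x.
  by rewrite sup0 addr_ge0 // mulr_ge0 // opnorm_ge0.
apply: ge_sup; first by exists (hnorm ((t%:C *: A + (1 - t)%:C *: B) *m x0)); exists x0.
move=> _ [x [hk h1] <-].
rewrite mulmxDl -!scalemxAl; apply: le_trans (hnorm_add _ _ _) _.
rewrite !hnorm_scale !absc_real !ger0_norm //.
by apply: lerD; apply: ler_wpM2l => //; apply: opnorm_ub.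
Qed.

Lemma innerDl u v w : inner (u + v) w = inner u w + inner v w.
Proof. by rewrite /inner -big_split; apply: eq_bigr => j _; rewrite mxE mulrDl. Qed.

Lemma innerZl (c : C) u w : inner (c *: u) w = c * inner u w.
Proof. by rewrite /inner mulr_sumr; apply: eq_bigr => j _; rewrite mxE mulrA. Qed.

Lemma innerDr u v w : inner w (u + v) = inner w u + inner w v.
Proof. by rewrite /inner -big_split; apply: eq_bigr => j _; rewrite mxE rmorphD mulrDr. Qed.

Lemma innerZr_real (t : R) u w : inner w (t%:C *: u) = t%:C * inner w u.
Proof.
rewrite /inner mulr_sumr; apply: eq_bigr => j _; rewrite mxE rmorphM /=. rewrite oppr0 complexr0.
by rewrite mulrCA.
Qed.

Lemma innerC u v : inner v u = conjc (inner u v).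
Proof.
rewrite /inner rmorph_sum; apply: eq_bigr => j _; rewrite rmorphM /= conjcK mulrC //.
Qed.

Lemma inner_suml (I : finType) (c : I -> C) (v : I -> 'cV[C]_n) w :
  inner (\sum_i c i *: v i) w = \sum_i c i * inner (v i) w.
Proof.
rewrite /inner; under eq_bigr do rewrite summxE mulr_suml.
rewrite exchange_big /=; apply: eq_bigr => i _; rewrite mulr_sumr.
by apply: eq_bigr => j _; rewrite mxE mulrA.
Qed.

Lemma inner_self u : inner u u = (hnorm u ^+ 2)%:C.
Proof.
rewrite hnorm_sq rmorph_sum /inner; apply: eq_bigr => j _.
by rewrite rmorphXn /= abscE sqr_normc.
Qed.

End Ops.

Section Spec.
Variables n N : nat.
Implicit Types F G : 'I_N -> 'cV[C]_n.

Lemma inner0l (w : 'cV[C]_n) : inner 0 w = 0.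
Proof. by rewrite /inner big1 // => j _; rewrite mxE mul0r. Qed.

Lemma err_op1_mul (q : 'I_N -> R) i F G (x : 'cV[C]_n) :
  err_op q [set i]%SET F G *m x = ((q i)%:C * inner x (F i)) *: G i.
Proof.
rewrite /err_op big_set1 -scalemxAl -mulmxA.
have -> : \row_(j < n) conjc (F i j 0) *m x = (inner x (F i))%:M.
  apply/matrixP => a b; rewrite (ord1 a) (ord1 b) !mxE /inner /=.
  by apply: eq_bigr => j _; rewrite !mxE mulrC.
by rewrite mul_mx_scalar scalerA.
Qed.

Lemma eig_bound (q : 'I_N -> R) i F G l :
  is_eigenvalue (err_op q [set i]%SET F G) l ->
  absc l <= `|q i| * absc (inner (G i) (F i)).
Proof.
move=> [x [xnz Hx]]; rewrite err_op1_mul in Hx.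
have [->|lnz] := eqVneq l 0.
  rewrite -(rmorph0 (real_complex R)) absc_real normr0.
  by rewrite mulr_ge0 ?absc_ge0.
set s := inner x (F i) in Hx.
have hx : x = (l^-1 * ((q i)%:C * s)) *: G i.
  by rewrite -scalerA Hx scalerA mulVf // scale1r.
have snz : s != 0.
  apply: contraNneq xnz => s0; rewrite s0 mulr0 scale0r in Hx.
  by move/esym/eqP: Hx; rewrite scaler_eq0 (negbTE lnz).
have hs : s = l^-1 * ((q i)%:C * s) * inner (G i) (F i).
  by rewrite {1}/s {1}hx innerZl.
have -> : l = (q i)%:C * inner (G i) (F i).
  apply: (mulIf snz); rewrite {1}hs !mulrA mulfV // mul1r mulrAC //.
by rewrite abscM absc_real.
Qed.

Lemma specrad_set_ub (q : 'I_N -> R) i F G :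
  has_ubound [set absc l | l in [set l | is_eigenvalue (err_op q [set i]%SET F G) l]].
Proof. by exists (`|q i| * absc (inner (G i) (F i))) => _ [l hl <-]; apply: eig_bound. Qed.

Lemma specrad_le (q : 'I_N -> R) i F G :
  specrad (err_op q [set i]%SET F G) <= `|q i| * absc (inner (G i) (F i)).
Proof.
rewrite /specrad.
have [[l0 hl0]|nl] := pselect (exists l, is_eigenvalue (err_op q [set i]%SET F G) l); last first.
  have -> : [set absc l | l in [set l | is_eigenvalue (err_op q [set i]%SET F G) l]] = set0.
    by apply/seteqP; split => [y [l hl _]|y //]; apply: nl; exists l.
  by rewrite sup0 mulr_ge0 ?absc_ge0.
apply: ge_sup; first by exists (absc l0); exists l0.
by move=> _ [l hl <-]; apply: eig_bound.
Qed.

Lemma specrad_ge (q : 'I_N -> R) i F G :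
  `|q i| * absc (inner (G i) (F i)) <= specrad (err_op q [set i]%SET F G).
Proof.
rewrite /specrad.
have [Gz|Gnz] := eqVneq (G i) 0.
  rewrite Gz inner0l -(rmorph0 (real_complex R)) absc_real normr0 mulr0.
  have [[l0 hl0]|nl] := pselect (exists l, is_eigenvalue (err_op q [set i]%SET F G) l); last first.
    have -> : [set absc l | l in [set l | is_eigenvalue (err_op q [set i]%SET F G) l]] = set0.
      by apply/seteqP; split => [y [l hl _]|y //]; apply: nl; exists l.
    by rewrite sup0.
  apply: le_trans (absc_ge0 l0) _; apply: ub_le_sup (specrad_set_ub q i F G) _ _.
  by exists l0.
have -> : `|q i| * absc (inner (G i) (F i)) = absc ((q i)%:C * inner (G i) (F i)).
  by rewrite abscM absc_real.
apply: ub_le_sup (specrad_set_ub q i F G) _ _; exists ((q i)%:C * inner (G i) (F i)) => //.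
by exists (G i); split => //; rewrite err_op1_mul.
Qed.

Lemma err_op_conv (q : 'I_N -> R) L F G1 G2 (t : R) :
  err_op q L F (fun i => t%:C *: G1 i + (1 - t)%:C *: G2 i) =
  t%:C *: err_op q L F G1 + (1 - t)%:C *: err_op q L F G2.
Proof.
rewrite /err_op !scaler_sumr -big_split; apply: eq_bigr => i _.
by rewrite mulmxDl scalerDr -!scalemxAl !scalerA [_ * (q i)%:C]mulrC [(1 - t)%:C * _]mulrC.
Qed.

End Spec.

Section Final.
Variables n N : nat.
Implicit Types F G : 'I_N -> 'cV[C]_n.

Lemma AP1_ge0 k (p : 'I_N -> R) F G : 0 <= AP1 k p F G.
Proof. by rewrite /AP1; apply: bigmax_ge_id. Qed.

Lemma absc_conv_le (t : R) (a b : C) : 0 <= t <= 1 ->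
  absc (t%:C * a + (1 - t)%:C * b) <= t * absc a + (1 - t) * absc b.
Proof.
case/andP => t0 t1; have t1' : 0 <= 1 - t by rewrite subr_ge0.
apply: le_trans (absc_add _ _) _.
by rewrite !abscM !absc_real !ger0_norm.
Qed.

Lemma arith (t o s o1 s1 o2 s2 A1 A2 : R) : o <= t*o1 + (1-t)*o2 -> s <= t*s1+(1-t)*s2 ->
  t*((o1+s1)/2) <= t*A1 -> (1-t)*((o2+s2)/2) <= (1-t)*A2 -> (o+s)/2 <= t*A1 + (1-t)*A2.
Proof. move=> *; lra. Qed.

Lemma AP1_conv k (p : 'I_N -> R) F G1 G2 (t : R) : 0 <= t <= 1 ->
  AP1 k p F (fun i => t%:C *: G1 i + (1 - t)%:C *: G2 i) <=
  t * AP1 k p F G1 + (1 - t) * AP1 k p F G2.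
Proof.
move=> ht; have /andP [t0 t1] := ht; have t1' : 0 <= 1 - t by rewrite subr_ge0.
rewrite {1}/AP1; apply: bigmax_le.
  by rewrite addr_ge0 // mulr_ge0 // AP1_ge0.
move=> L /cards1P [i ->].
set q := weight n p.
set E1 := err_op q [set i]%SET F G1.
set E2 := err_op q [set i]%SET F G2.
have h1 := opnorm_convex _ k E1 E2 t ht.
rewrite /E1 /E2 -err_op_conv in h1.
have h2 : specrad (err_op q [set i]%SET F (fun i => t%:C *: G1 i + (1 - t)%:C *: G2 i))
    <= t * specrad E1 + (1 - t) * specrad E2.
  apply: le_trans (specrad_le _ _ _ _ _ _) _.
  rewrite innerDl !innerZl.
  have hq : 0 <= `|q i| by [].
  apply: le_trans (ler_wpM2l hq (absc_conv_le _ _ _ ht)) _.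
  have s1 := specrad_ge _ _ q i F G1; have s2 := specrad_ge _ _ q i F G2.
  rewrite -/E1 -/E2 in s1 s2.
  rewrite mulrDr !mulrA ![`|q i| * _]mulrC -!mulrA.
  by apply: lerD; apply: ler_wpM2l.
have m1 : (opnorm k E1 + specrad E1) / 2 <= AP1 k p F G1.
  rewrite /AP1; apply: (le_bigmax_cond 0 (fun L => (opnorm k (err_op q L F G1) + specrad (err_op q L F G1)) / 2)).
  by rewrite cards1.
have m2 : (opnorm k E2 + specrad E2) / 2 <= AP1 k p F G2.
  rewrite /AP1; apply: (le_bigmax_cond 0 (fun L => (opnorm k (err_op q L F G2) + specrad (err_op q L F G2)) / 2)).
  by rewrite cards1.
have m1' := ler_wpM2l t0 m1; have m2' := ler_wpM2l t1' m2.
move: h1 h2 m1' m2'; rewrite /E1 /E2; exact: arith.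
Qed.
End Final.

Section Dual.
Variables n N : nat.
Implicit Types F G : 'I_N -> 'cV[C]_n.

Lemma inH_conv k (u v : 'cV[C]_n) (t : R) : inH k u -> inH k v ->
  inH k (t%:C *: u + (1 - t)%:C *: v).
Proof.
move=> hu hv j; move: (hu j) (hv j); rewrite /is_scalar; case: k {hu hv} => // Hu Hv.
have rt : forall s : R, s%:C \is Num.real by move=> s; apply/complex_realP; exists s.
rewrite !mxE raddfD /= !ImMl ?rt // Hu Hv !mulr0 addr0 //.
Qed.


Lemma arith2 (t S1 S2 X1 X2 : R) : t*S1 <= t*X1 -> (1-t)*S2 <= (1-t)*X2 -> 0 <= X1 -> 0 <= X2 ->
  0 <= (1-t)*X1 -> 0 <= t*X2 -> t*S1+(1-t)*S2 <= X1 + X2.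
Proof. move=> *; lra. Qed.

Lemma arith3 (B e h2 Sc Sd : R) : e * B = 1 -> 0 <= e ->
  h2 <= B/2*Sc + e/2*Sd -> Sd <= B*h2 -> e*h2 <= Sc.
Proof.
move=> eB e0 H1 H2.
have := ler_wpM2l e0 H2; rewrite mulrA eB mul1r => h1.
have h3 : h2 <= B * Sc by lra.
by have := ler_wpM2l e0 h3; rewrite mulrA eB mul1r.
Qed.

Lemma dual_conv k F G1 G2 (t : R) : is_frame k F -> is_dual k F G1 -> is_dual k F G2 ->
  0 <= t <= 1 -> is_dual k F (fun i => t%:C *: G1 i + (1 - t)%:C *: G2 i).
Proof.
move=> [hF [AF [BF [AF0 [BF0 hFb]]]]] [[hG1 [A1 [B1 [A10 [B10 hb1]]]]] r1].
move=> [[hG2 [A2 [B2 [A20 [B20 hb2]]]]] r2] ht.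
have /andP [t0 t1] := ht; have t1' : 0 <= 1 - t by rewrite subr_ge0.
set Gt := fun i => _.
have conv1 : forall v : 'cV[C]_n, t%:C *: v + (1-t)%:C *: v = v.
  by move=> v; rewrite -scalerDl -rmorphD /= addrC subrK rmorph1 scale1r.
have rec2 : forall f, inH k f -> f = \sum_i inner f (Gt i) *: F i.
  move=> f hf; rewrite /Gt.
  under eq_bigr do rewrite innerDr !innerZr_real scalerDl -!scalerA.
  by rewrite big_split /= -!scaler_sumr -(proj2 (r1 f hf)) -(proj2 (r2 f hf)) conv1.
have rec1 : forall f, inH k f -> f = \sum_i inner f (F i) *: Gt i.
  move=> f hf; rewrite /Gt.
  under eq_bigr do rewrite scalerDr !scalerA !(mulrC (inner _ _)) -!scalerA.
  by rewrite big_split /= -!scaler_sumr -(proj1 (r1 f hf)) -(proj1 (r2 f hf)) conv1.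
split; last by move=> f hf; split; [exact: rec1|exact: rec2].
split; first by move=> i; apply: inH_conv.
exists BF^-1, (B1 + B2); split; first by rewrite invr_gt0.
split; first by rewrite addr_gt0.
move=> f hf; split.
  have [_ uF] := hFb f hf.
  have key : hnorm f ^+ 2 <= \sum_i absc (inner f (Gt i)) * absc (inner f (F i)).
    have e : hnorm f ^+ 2 = absc (inner f f) by rewrite inner_self absc_real ger0_norm // sqr_ge0.
    rewrite e {1}(rec2 f hf) inner_suml.
    apply: le_trans (absc_sum _ _ _) _; apply: ler_sum => i _.
    by rewrite abscM (innerC _ f (F i)) absc_conj.
  have BFn : BF != 0 by rewrite gt_eqF.
  have eB : BF^-1 * BF = 1 by rewrite mulVf.
  have amgm : forall a b : R, a * b <= BF / 2 * a ^+ 2 + BF^-1 / 2 * b ^+ 2.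
    move=> a b.
    have h : 0 <= BF^-1 * (BF * a - b) ^+ 2 by rewrite mulr_ge0 // ?sqr_ge0 // ltW // invr_gt0.
    have E : BF^-1 * (BF * a - b) ^+ 2 = (BF^-1 * BF) * (BF * a ^+ 2) - 2 * (BF^-1 * BF) * (a * b) + BF^-1 * b ^+ 2 by ring.
    rewrite E eB in h; lra.
  have s1 : \sum_i absc (inner f (Gt i)) * absc (inner f (F i)) <=
      BF / 2 * \sum_i absc (inner f (Gt i)) ^+ 2 + BF^-1 / 2 * \sum_i absc (inner f (F i)) ^+ 2.
    rewrite !mulr_sumr -big_split /=; apply: ler_sum => i _; apply: amgm.
  apply: (arith3 _ _ _ _ _ eB); first by rewrite ltW // invr_gt0.
    exact: le_trans key s1.
  exact: uF.
have [_ u1] := hb1 f hf; have [_ u2] := hb2 f hf.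
have hh : 0 <= hnorm f ^+ 2 by apply: sqr_ge0.
apply: (@le_trans _ _ (\sum_i (t * absc (inner f (G1 i)) ^+ 2 + (1 - t) * absc (inner f (G2 i)) ^+ 2))).
  apply: ler_sum => i _; rewrite /Gt innerDr !innerZr_real.
  have hc := absc_conv_le _ (inner f (G1 i)) (inner f (G2 i)) ht.
  move: hc; set a := absc (inner f (G1 i)); set b := absc (inner f (G2 i)).
  set c := absc _ => hc.
  have c0 : 0 <= c by apply: absc_ge0.
  have a0 : 0 <= a by apply: absc_ge0.
  have b0 : 0 <= b by apply: absc_ge0.
  have hab : 0 <= t * (1 - t) * (a - b) ^+ 2 by rewrite mulr_ge0 ?sqr_ge0 // mulr_ge0.
  nra.
rewrite big_split /= -!mulr_sumr (mulrDl B1 B2).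
apply: (arith2 _ _ _ _ _ (ler_wpM2l t0 u1) (ler_wpM2l t1' u2)).
- by rewrite mulr_ge0 // ltW.
- by rewrite mulr_ge0 // ltW.
- by rewrite mulr_ge0 // mulr_ge0 // ltW.
- by rewrite mulr_ge0 // mulr_ge0 // ltW.
Qed.

End Dual.
End Aux.

Theorem theorem3p1 (R : realType) (k : scalar_field) (n N : nat)
    (F : 'I_N -> 'cV[R[i]]_n) (p : 'I_N -> R) :
  is_frame k F -> prob_seq p ->
  convex_frames (PASOD1 k p F).
Proof.
move=> hF hp G1 G2 [d1 e1] [d2 e2] t ht.
have dt := dual_conv _ _ _ _ _ _ _ _ hF d1 d2 ht.
split; first exact: dt.
apply/eqP; rewrite eq_le; apply/andP; split.
  have := AP1_conv _ _ _ k p F G1 G2 _ ht; rewrite e1 e2.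
  by have -> : t * AP1_opt k p F + (1 - t) * AP1_opt k p F = AP1_opt k p F by ring.
rewrite /AP1_opt; apply: ge_inf; last by exists (fun i => t%:C *: G1 i + (1 - t)%:C *: G2 i).
by exists 0 => _ [G _ <-]; apply: (AP1_ge0 _ _ _ k p F G).
Qed.
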